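(* Let $\mathbf P$ be a cyclic CFSM protocol with communication graph $G=(N,E)$. Let $\Gamma$ be a path in the global state space of $\mathbf P$ from a global state $(S,C^0)$ to a global state $(S',C^0)$. Then for every edge $\beta\in E$ there exists a path $\Gamma'$ in the global state space such that (a) $\Gamma$ and $\Gamma'$ are locally equal, and (b) every global state $(S'',(x_\xi:\xi\in E))$ on $\Gamma'$ satisfies $\sum_{\xi\in E,\ \xi\neq\beta}|x_\xi|\le 1$.
   Context: A CFSM protocol $\mathbf P$ consists of: a finite directed graph $G=(N,E)$ (the communication graph; each edge $\xi\in E$ has a tail $-\xi\in N$ and a head $+\xi\in N$); pairwise disjoint finite sets $M_\xi$ of messages, $\xi\in E$; and for each $j\in N$ a finite state machine $F_j=(K_j,\Sigma_j,T_j,h_j)$, where $K_j$ is a finite set of states, $h_j\in K_j$ is the initial state, $\Sigma_j=\{+b: b\in M_\xi,\ j=+\xi\}\cup\{-b: b\in M_\xi,\ j=-\xi\}$, and $T_j\subseteq K_j\times\Sigma_j\times K_j$ is the set of transitions, written $p\xrightarrow{e}q$ ($+b$ means ''receive $b$'', $-b$ means ''send $b$''). A composite state is a vector $S=(p_j:j\in N)$ with $p_j\in K_j$; a channel content is $C=(x_\xi:\xi\in E)$ with $x_\xi\in M_\xi^*$; a global state is a pair $(S,C)$. $C^0$ denotes the channel content with all components equal to the empty word $\lambda$; the initial global state is $(S^0,C^0)$ with $S^0=(h_j:j\in N)$. Steps: with $S=(p_j)$, $S'=(q_j)$, $C=(x_\xi)$, $C'=(y_\xi)$, we write $(S,C)\vdash^{+b}(S',C')$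 if there is $\beta\in E$ with $i=+\beta$, $b\in M_\beta$, $p_i\xrightarrow{+b}q_i$ in $F_i$, $p_j=q_j$ for $j\neq i$, $x_\beta=b\,y_\beta$ and $x_\xi=y_\xi$ for $\xi\neq\beta$; and $(S,C)\vdash^{-b}(S',C')$ if there is $\beta\in E$ with $i=-\beta$, $b\in M_\beta$, $p_i\xrightarrow{-b}q_i$ in $F_i$, $p_j=q_j$ for $j\ne i$, $y_\beta=x_\beta b$ and $y_\xi=x_\xi$ for $\xi\neq\beta$. A global state is reachable if it can be reached from $(S^0,C^0)$ by a finite sequence of steps. The global state space is the labelled directed graph whose nodes are the reachable global states and whose edges are these steps; a path is a finite sequence of consecutive steps. For a path $\Gamma=(S_0,C_0)\vdash^{e_1}\cdots\vdash^{e_k}(S_k,C_k)$ and $i\in N$, the image of $\Gamma$ in $F_i$ is the path in the transition diagram of $F_i$, starting at the $i$-th component of $S_0$, formed (in order) by the transitions of $F_i$ performed at those steps $t$ with $e_t\in\Sigma_i$ (a path of length 0 if there are none). Two paths are locally equal if their images in $F_i$ coincide for every $i\in N$. A protocol is cyclic if its communication graph is a directed cycle. *)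

(* Defs.v *)
From mathcomp Require Import all_boot.
Set Implicit Arguments. Unset Strict Implicit. Unset Printing Implicit Defensive.

(* Labels: Send b is "-b", Recv b is "+b". *)
Inductive act (M : Type) := Send of M | Recv of M.
Arguments Send {M}. Arguments Recv {M}.

(* The machine performing a label: -b is performed by the tail of the edge
   carrying b, +b by its head.  (e \in Sigma_j  <->  act_owner e = j.) *)
Definition act_owner (N E M : Type) (tl hd : E -> N) (chan : M -> E)
  (e : act M) : N :=
  match e with Send b => tl (chan b) | Recv b => hd (chan b) end.

(* A CFSM protocol.  Messages form one finite type [msg]; [chan b] is the
   edge xi with b \in M_xi (so the M_xi are pairwise disjoint finite sets). *)
Record protocol := Protocol {
  node : finType;
  edge : finType;
  tail : edge -> node;
  head : edge -> node;
  msg : finType;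
  chan : msg -> edge;
  state : node -> finType;
  init : forall j, state j;
  trans : forall j, state j -> act msg -> state j -> bool;
  trans_alph : forall j (p : state j) e q, trans p e q -> act_owner tail head chan e = j
}.

Section Semantics.
Variable P : protocol.

Definition owner (e : act (msg P)) : node P := act_owner (@tail P) (@head P) (@chan P) e.

Record gstate := GState {
  gS : forall j : node P, @state P j;
  gC : edge P -> seq (msg P)
}.

Definition C0 : edge P -> seq (msg P) := fun _ => [::].
Definition ginit : gstate := GState (@init P) C0.

Definition step (g : gstate) (e : act (msg P)) (g' : gstate) : Prop :=
  match e with
  | Recv b =>
      let i := head (chan b) in let be := chan b in
      trans (gS g i) (Recv b) (gS g' i) /\
      (forall j, j <> i -> gS g j = gS g' j) /\
      gC g be = b :: gC g' be /\
      (forall xi, xi <> be -> gC g xi = gC g' xi)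
  | Send b =>
      let i := tail (chan b) in let be := chan b in
      trans (gS g i) (Send b) (gS g' i) /\
      (forall j, j <> i -> gS g j = gS g' j) /\
      gC g' be = rcons (gC g be) b /\
      (forall xi, xi <> be -> gC g xi = gC g' xi)
  end.

(* A path is a start global state g0 together with the list of its steps
   (label, reached global state). *)
Fixpoint is_path (g0 : gstate) (s : seq (act (msg P) * gstate)) : Prop :=
  match s with
  | [::] => True
  | (e, g1) :: s' => step g0 e g1 /\ is_path g1 s'
  end.

Definition path_end (g0 : gstate) (s : seq (act (msg P) * gstate)) : gstate :=
  last g0 (map snd s).

Definition path_states (g0 : gstate) (s : seq (act (msg P) * gstate)) : seq gstate :=
  g0 :: map snd s.

Definition reachable (g : gstate) : Prop :=
  exists s, is_path ginit s /\ path_end ginit s = g.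

(* A path in the global state space: all its states are reachable, which
   amounts to its start being reachable. *)
Definition gs_path (g0 : gstate) (s : seq (act (msg P) * gstate)) : Prop :=
  reachable g0 /\ is_path g0 s.

Fixpoint image_trans (i : node P) (g0 : gstate) (s : seq (act (msg P) * gstate))
  : seq (@state P i * act (msg P) * @state P i) :=
  match s with
  | [::] => [::]
  | (e, g1) :: s' =>
      (if owner e == i then [:: (gS g0 i, e, gS g1 i)] else [::])
        ++ image_trans i g1 s'
  end.

Definition image (i : node P) (g0 : gstate) (s : seq (act (msg P) * gstate)) :=
  (gS g0 i, image_trans i g0 s).

Definition locally_equal g0 s g0' s' : Prop :=
  forall i : node P, image i g0 s = image i g0' s'.

Definition cyclic : Prop :=
  exists n (nd : 'I_n -> node P) (ed : 'I_n -> edge P),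
    0 < n /\ bijective nd /\ bijective ed /\
    forall k : 'I_n, tail (ed k) = nd k /\ head (ed k) = nd (ordS k).

End Semantics.

(* Main.v *)
Require Import Defs.
From Stdlib Require List.
From mathcomp Require Import all_boot.
From Stdlib Require Import FunctionalExtensionality.
From mathcomp Require Import zify.
Set Implicit Arguments. Unset Strict Implicit. Unset Printing Implicit Defensive.

Section Gen.
Variable P : protocol.
Local Notation gst := (gstate P).
Local Notation ac := (act (msg P)).
Local Notation hd := (@Defs.head P).

Definition achan (e : ac) : edge P := match e with Send b => chan b | Recv b => chan b end.
Definition chrel (e : ac) (X Y : seq (msg P)) : Prop :=
  match e with Send b => Y = rcons X b | Recv b => X = b :: Y end.

Lemma stepE (x : gst) e y : step x e y <->
  [/\ trans (gS x (owner e)) e (gS y (owner e)),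
      (forall j, j <> owner e -> gS x j = gS y j),
      chrel e (gC x (achan e)) (gC y (achan e)) &
      (forall c, c <> achan e -> gC x c = gC y c)].
Proof. by case: e => b /=; split => [[? [? [? ?]]]|[? ? ? ?]]. Qed.

Lemma is_path_cat (g : gst) (s1 s2 : seq (ac * gst)) : is_path g (s1 ++ s2) <->
  is_path g s1 /\ is_path (last g (map snd s1)) s2.
Proof.
elim: s1 g => [|[e h] s1 IH] g /=; first by split => // [[]].
rewrite IH; split; [by case=> ? []|by case=> [[? ?] ?]].
Qed.

Lemma image_cat x (g : gst) (s1 s2 : seq (ac * gst)) : image_trans x g (s1 ++ s2) =
  image_trans x g s1 ++ image_trans x (last g (map snd s1)) s2.
Proof. by elim: s1 g => [|[e h] s1 IH] g //=; rewrite IH catA. Qed.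

Definition noown (x : node P) (s : seq (ac * gst)) := all (fun p => owner p.1 != x) s.

Lemma image_nil x (g : gst) s : noown x s -> image_trans x g s = [::].
Proof. elim: s g => [|[e h] s IH] g //= /andP[ne /IH ->]; by rewrite (negbTE ne). Qed.

Lemma image_nilP x (g : gst) s : image_trans x g s = [::] -> noown x s.
Proof.
elim: s g => [|[e h] s IH] g //=; case: ifP => //= ne /IH H; by rewrite /noown /= ?ne.
Qed.

Lemma untouched x (g : gst) s : is_path g s -> noown x s -> gS (last g (map snd s)) x = gS g x.
Proof.
elim: s g => [|[e h] s IH] g //= [st pt] /andP[ne ns].
rewrite IH //; case/stepE: st => _ H _ _; symmetry; apply: H; by apply/eqP; rewrite eq_sym.
Qed.

Lemma grow c (g : gst) s : is_path g s -> noown (hd c) s ->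
  exists w, gC (last g (map snd s)) c = gC g c ++ w.
Proof.
elim: s g => [|[e h] s IH] g /=; first by exists [::]; rewrite cats0.
move=> [st pt] /andP[ne ns]; have [w Hw] := IH h pt ns; rewrite Hw.
case/stepE: st => _ _ ch oc.
have [ec|nc] := eqVneq (achan e) c; last by exists w; rewrite oc //; apply/eqP; rewrite eq_sym.
move: ne ch {oc}; case: e ec => b /= <- ne ch; last by rewrite eqxx in ne.
by rewrite ch; exists (b :: w); rewrite cat_rcons.
Qed.

Lemma first_dec x (g : gst) s p e q L : image_trans x g s = (p, e, q) :: L ->
  exists s1 h s2, s = s1 ++ (e, h) :: s2 /\ [/\ noown x s1, owner e = x,
    p = gS (last g (map snd s1)) x, q = gS h x & image_trans x h s2 = L].
Proof.
elim: s g => [|[e1 h1] s IH] g //=; case: ifP => [/eqP oe [<- <- <- <-]|ne /IH].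
  by exists [::], h1, s.
move=> [s1 [h [s2 [-> [ns oe' -> -> <-]]]]].
by exists ((e1, h1) :: s1), h, s2; split => //=; rewrite ne.
Qed.


Definition supd (S : forall j : node P, @state P j) (i : node P) (q : @state P i) :
  forall j, @state P j :=
  fun j => match i =P j with
           | ReflectT E => eq_rect i (fun k => @state P k) q j E
           | ReflectF _ => S j end.

Lemma supd_eq S i (q : @state P i) : supd S q i = q.
Proof. rewrite /supd; case: eqP => // E; by rewrite (eq_axiomK E). Qed.

Lemma supd_neq S i (q : @state P i) j : i <> j -> supd S q j = S j.
Proof. by rewrite /supd; case: eqP. Qed.

Lemma supd_congr S S' i (q : @state P i) j : (i <> j -> S j = S' j) ->
  supd S q j = supd S' q j.
Proof. by rewrite /supd; case: eqP => // ne; apply. Qed.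

Definition cmod (e : ac) (X : seq (msg P)) :=
  match e with Send b => rcons X b | Recv _ => behead X end.
Definition inv (e : ac) (g : gst) :=
  forall b, e = Recv b -> exists w, gC g (chan b) = b :: w.

Lemma chrel_cmod e X Y : chrel e X Y -> cmod e X = Y.
Proof. by case: e => b /= ->. Qed.

Lemma chrel_shift e e' X Y : achan e' = achan e -> owner e' != owner e ->
  (forall b, e = Recv b -> exists w, X = b :: w) ->
  chrel e' X Y -> chrel e' (cmod e X) (cmod e Y).
Proof.
case: e => b; case: e' => b' /= E; rewrite /owner /= E ?eqxx //= => _ ix ch.
  by rewrite ch.
have [w Hw] := ix b erefl; by rewrite ch Hw.
Qed.

Lemma inv_step e (x : gst) e' y : step x e' y -> owner e' != owner e -> inv e x -> inv e y.
Proof.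
case/stepE => _ _ ch oc ne ix b Eb; have [w Hw] := ix b Eb; subst e.
have [E|nE] := eqVneq (achan e') (chan b); last by exists w; rewrite -oc ?Hw //; apply/eqP; rewrite eq_sym.
move: ne ch {oc}; case: e' E => b' /= E; rewrite /owner /= E ?eqxx // => _ ->.
by rewrite Hw; exists (rcons w b').
Qed.

Section Shift.
Variable e : ac.
Variable q : @state P (owner e).

Definition shift (g : gst) : gst :=
  GState (supd (gS g) q) (fun c => if c == achan e then cmod e (gC g c) else gC g c).
Definition sp (p : ac * gst) := (p.1, shift p.2).

Lemma shift_step x e' y : step x e' y -> owner e' != owner e -> inv e x ->
  step (shift x) e' (shift y).
Proof.
move=> st ne ix; case/stepE: st => tr os ch oc; apply/stepE; split.
- rewrite /shift /= !supd_neq //; apply/eqP; by rewrite eq_sym.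
- move=> j nj; rewrite /shift /=; apply: supd_congr => _; exact: os.
- rewrite /shift /=; case: eqP => [E|_]; last done.
  apply: chrel_shift => //; move=> b Eb; have [w Hw] := ix b Eb; exists w.
  by rewrite E Eb.
- move=> c nc; rewrite /shift /= oc //.
Qed.

Lemma shift_path g t : is_path g t -> noown (owner e) t -> inv e g ->
  is_path (shift g) (map sp t).
Proof.
elim: t g => [|[e1 h1] t IH] g //= [st pt] /andP[ne nt] ig; split.
  exact: shift_step.
apply: IH => //; exact: inv_step st ne ig.
Qed.

Lemma shift_image x g t : noown (owner e) t ->
  image_trans x (shift g) (map sp t) = image_trans x g t.
Proof.
elim: t g => [|[e1 h1] t IH] g //= /andP[ne nt]; rewrite IH //.
case: eqP => // E; rewrite /shift /= !supd_neq //; apply/eqP; by rewrite -E eq_sym.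
Qed.

Lemma shift_last x h : step x e h -> q = gS h (owner e) -> shift x = h.
Proof.
case/stepE => tr os ch oc Eq; rewrite /shift; case: h tr Eq os ch oc => Sh Ch /= tr Eq os ch oc.
f_equal.
- apply: functional_extensionality_dep => j; rewrite /supd; case: eqP => [E|nE].
    by subst j.
  by apply: os => E; apply: nE.
- apply: functional_extensionality => c; case: eqP => [->|nc].
    exact: chrel_cmod.
  exact: oc.
Qed.

Lemma shift_first g s1 h : is_path g s1 -> noown (owner e) s1 ->
  step (last g (map snd s1)) e h -> q = gS h (owner e) -> inv e g ->
  step g e (shift g).
Proof.
move=> ps ns st Eq ig; case/stepE: st => tr _ _ _; apply/stepE; split.
- by rewrite /shift /= supd_eq Eq -(untouched ps ns).
- by move=> j nj; rewrite /shift /= supd_neq //; apply: nesym.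
- rewrite /shift /= eqxx; move: ig; case: (e) => b //= ig.
  have [w Hw] := ig b erefl; by rewrite Hw.
- by move=> c nc; rewrite /shift /=; case: eqP.
Qed.

End Shift.

Lemma move (g : gst) s1 e h s2 : is_path g (s1 ++ (e, h) :: s2) -> noown (owner e) s1 ->
  inv e g ->
  [/\ is_path g ((e, shift (gS h (owner e)) g) :: map (sp (gS h (owner e))) s1 ++ s2),
      path_end g ((e, shift (gS h (owner e)) g) :: map (sp (gS h (owner e))) s1 ++ s2)
        = path_end g (s1 ++ (e, h) :: s2) &
      forall x, image_trans x g ((e, shift (gS h (owner e)) g) :: map (sp (gS h (owner e))) s1 ++ s2)
        = image_trans x g (s1 ++ (e, h) :: s2)].
Proof.
move=> /is_path_cat [p1 /= [st p2]] ns ig.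
set q := gS h (owner e).
have sl : shift q (last g (map snd s1)) = h by apply: shift_last st _.
have lm : last (shift q g) (map snd (map (sp q) s1)) = h.
  by rewrite -map_comp (@eq_map _ _ _ (shift q \o snd)) // map_comp last_map.
split.
- rewrite /=; split; first exact: shift_first p1 ns st _ ig.
  apply/is_path_cat; split; first exact: shift_path.
  by rewrite lm.
- rewrite /path_end /= map_cat last_cat lm map_cat last_cat /=.
  done.
- move=> x; rewrite /= image_cat lm image_cat /= shift_image //.
  case: eqP => [E|_]; last by [].
  subst x; rewrite image_nil //= /shift /= supd_eq -(untouched p1 ns).
  done.
Qed.

End Gen.

Section Cyc.
Variable P : protocol.
Local Notation gst := (gstate P).
Local Notation ac := (act (msg P)).
Local Notation hd := (@Defs.head P).
Variable n : nat.
Variable nd : 'I_n -> node P.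
Variable ed : 'I_n -> edge P.
Variable edinv : edge P -> 'I_n.
Variable ndI : injective nd.
Variable edK : cancel ed edinv.
Variable edinvK : cancel edinv ed.
Variable htl : forall k, tail (ed k) = nd k.
Variable hhd : forall k, hd (ed k) = nd (ordS k).
Variable beta : edge P.

Definition nbempty (g : gst) := forall xi, xi != beta -> gC g xi = [::].
Definition bounded (g : gst) := \sum_(xi : edge P | xi != beta) size (gC g xi) <= 1.
Definition Good (g : gst) s := exists s', is_path g s' /\
  (forall x, image_trans x g s = image_trans x g s') /\
  (forall h, List.In h (g :: map snd s') -> bounded h).

Lemma send_edge c k : tail c = nd k -> c = ed k.
Proof. by rewrite -{1}(edinvK c) htl => /ndI <-; rewrite edinvK. Qed.

Lemma head_inj c c' : hd c = hd c' -> c = c'.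
Proof.
by rewrite -(edinvK c) -(edinvK c') !hhd => /ndI /ordS_inj ->.
Qed.

Lemma head_neq_tail k : ed k != beta -> hd (ed k) <> tail (ed k).
Proof.
move=> nb; rewrite hhd htl => /ndI /(congr1 val) /= H.
have kn := ltn_ord k.
have [lt|ge] := ltnP k.+1 n.
  by rewrite modn_small // in H; lia.
have En : n = k.+1 by lia.
have k0 : (k : nat) = 0 by rewrite -H {2}En modnn.
have : edinv beta = k by apply: ord_inj; have := ltn_ord (edinv beta); lia.
by move=> E; move: nb; rewrite -E edinvK eqxx.
Qed.

Lemma bounded_nb g : nbempty g -> bounded g.
Proof. by move=> nb; rewrite /bounded big1 // => xi /nb ->. Qed.

Lemma bounded_one (g : gst) c : c != beta -> size (gC g c) <= 1 ->
  (forall xi, xi != beta -> xi != c -> gC g xi = [::]) -> bounded g.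
Proof.
move=> cb sc H; rewrite /bounded (bigD1 c) //= big1 ?addn0 // => xi /andP[a b].
by rewrite H.
Qed.

Lemma Good_cons g e h s : step g e h -> bounded g -> Good h s -> Good g ((e, h) :: s).
Proof.
move=> st bg [s' [ps [im bs]]]; exists ((e, h) :: s'); split => //; split.
  by move=> x /=; rewrite im.
move=> h0 /= [<-|]; first done.
exact: bs.
Qed.

Lemma Good_eq g s t : (forall x, image_trans x g s = image_trans x g t) -> Good g t -> Good g s.
Proof. by move=> E [s' [ps [im bs]]]; exists s'; split => //; split => // x; rewrite E. Qed.

Lemma noown_cat x (s1 s2 : seq (ac * gst)) : noown x (s1 ++ s2) = noown x s1 && noown x s2.
Proof. by rewrite /noown all_cat. Qed.

Lemma iter_ordS m (k : 'I_n) : (iter m (@ordS n) k : nat) = (k + m) %% n.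
Proof.
elim: m => [|m IH] /=; first by rewrite addn0 modn_small.
by rewrite IH -addn1 modnDml addn1 addnS.
Qed.

Lemma move_first x (g : gst) s p e q L : image_trans x g s = (p, e, q) :: L ->
  is_path g s -> inv e g ->
  exists g1 rest, [/\ step g e g1, is_path g1 rest, size rest = (size s).-1,
    path_end g1 rest = path_end g s &
    forall y, image_trans y g s = image_trans y g ((e, g1) :: rest)] /\
    (forall c, gC g1 c = if c == achan e then cmod e (gC g c) else gC g c) /\ owner e = x.
Proof.
move=> /first_dec [s1 [h [s2 [Es [ns ow _ _ _]]]]] ps ig; subst s.
rewrite -ow in ns.
have [[st pr] pe pim] := move ps ns ig.
exists (shift (gS h (owner e)) g), (map (sp (gS h (owner e))) s1 ++ s2).
split; last by split.
split => //; try (by rewrite size_cat size_map size_cat /= addnS).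
all: try (by move=> y; rewrite pim).
all: idtac.
Qed.

Lemma chain K (IH : forall (g : gst) s, size s < K -> is_path g s -> nbempty g ->
    nbempty (path_end g s) -> Good g s) m :
  forall k (g : gst) s p b q L, iter m (@ordS n) k = edinv beta -> size s <= K ->
  is_path g s -> nbempty g -> nbempty (path_end g s) ->
  image_trans (nd k) g s = (p, Send b, q) :: L -> Good g s.
Proof.
elim: m => [|m IHm] k g s p b q L Hm Hs ps ng ne Him.
all: have iv : inv (Send b) g by move=> b0.
all: have s0 : 0 < size s by move: Him; case: (s).
all: have [g1 [rest [[st1 pr sz pe pim] [gc1 ow]]]] := move_first Him ps iv.
all: have Ek : chan b = ed k by apply: send_edge.
all: have [Eb|Nb] := eqVneq (chan b) beta.
1,3: apply: (Good_eq pim); apply: Good_cons => //; first exact: bounded_nb.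
1,2: apply: IH => //; [ lia
     | move=> xi nx; rewrite gc1 /=; case: eqP => [E|_];
         [by move: nx; rewrite E Eb eqxx | exact: ng]
     | by rewrite pe ].
  by move: Hm Nb => /= Hm; rewrite Ek Hm edinvK eqxx.
have Hm' : iter m (@ordS n) (ordS k) = edinv beta by rewrite -iterSr.
set j := nd (ordS k).
have hj : hd (ed k) = j := hhd k.
have jk : j != nd k.
  apply/eqP; rewrite -hj -htl; apply: head_neq_tail; by rewrite -Ek.
case Ej: (image_trans j g s) => [|[[p' e'] q'] L'].
  exfalso.
  have [s1 [h [s2 [Es [_ _ _ _ _]]]]] := first_dec Him.
  move: (image_nilP Ej); rewrite Es noown_cat => /andP[_ /andP[_ ns2]].
  move: ps; rewrite Es => /is_path_cat [_ /= [st ps2]].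
  have ns2' : noown (hd (ed k)) s2 by rewrite hj.
  have [w Hw] := grow ps2 ns2'.
  have nbk : ed k != beta by rewrite -Ek.
  have := ne (ed k) nbk.
  rewrite Es /path_end map_cat last_cat /= Hw.
  case: st => _ [_ [ch _]]; rewrite -Ek ch.
  by move/(congr1 size); rewrite size_cat size_rcons.
case: e' Ej => b' Ej.
  exact: IHm Hm' Hs ps ng ne Ej.
have Ej1 : image_trans j g1 rest = (p', Recv b', q') :: L'.
  have := pim j; rewrite Ej /= Ek htl eq_sym (negbTE jk) /=.
  by move=> ->.
have [t1 [h' [t2 [Er [nt1 owr _ _ _]]]]] := first_dec Ej1.
have Ecb' : chan b' = ed k by apply: head_inj; rewrite hj.
have g1k : gC g1 (ed k) = [:: b] by rewrite gc1 /= -Ek eqxx (ng (chan b) Nb).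
have Ebb : b' = b.
  move: (pr); rewrite Er => /is_path_cat [pt1 /= [st' _]].
  have nt1' : noown (hd (ed k)) t1 by rewrite hj.
  have [w Hw] := grow pt1 nt1'.
  case: st' => _ [_ [ch _]].
  move: ch; rewrite Ecb' Hw g1k /=.
  by case=> ->.
subst b'.
have iv1 : inv (Recv b) g1 by move=> b0 [<-]; exists [::]; rewrite Ecb' g1k.
have [g2 [rest2 [[st2 pr2 sz2 pe2 pim2] [gc2 _]]]] := move_first Ej1 pr iv1.
apply: (Good_eq pim); apply: Good_cons => //; first exact: bounded_nb.
apply: (Good_eq pim2); apply: Good_cons => //.
  apply: (bounded_one (c := ed k)); first by rewrite -Ek.
    by rewrite g1k.
  by move=> xi nb nk; rewrite gc1 /= Ek (negbTE nk) ng.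
have szr : size rest = size t1 + (size t2).+1 by rewrite Er size_cat.
apply: IH => //.
- lia.
- move=> xi nx; rewrite gc2 gc1 /=; case: eqP => [->|_].
    by rewrite ng.
  exact: ng.
- by rewrite pe2 pe.
Qed.

Lemma main K : forall (g : gst) s, size s < K -> is_path g s -> nbempty g ->
  nbempty (path_end g s) -> Good g s.
Proof.
elim: K => // K IHK g [|[e1 h1] s0] Hs ps ng ne.
  exists [::]; split => //; split => // h0 /= [<-|//]; exact: bounded_nb.
have [Eb|Nb] := eqVneq (achan e1) beta.
  case: ps => st ps0; apply: Good_cons => //; first exact: bounded_nb.
  apply: IHK => //.
  move=> xi nx; case/stepE: st => _ _ _ oc; rewrite -oc ?ng //.
  by apply/eqP; rewrite Eb.
case: e1 Nb ps ne Hs => b /= Nb ps ne Hs.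
  set k := edinv (chan b).
  have Hm : iter (edinv beta + n - k) (@ordS n) k = edinv beta.
    apply: ord_inj; rewrite iter_ordS.
    have := ltn_ord k; have := ltn_ord (edinv beta) => h1' h2'.
    rewrite (_ : k + _ = edinv beta + n); last by lia.
    by rewrite modnDr modn_small.
  have Him : image_trans (nd k) g ((Send b, h1) :: s0) =
      (gS g (nd k), Send b, gS h1 (nd k)) :: image_trans (nd k) h1 s0.
    have tk : tail (chan b) = nd k by rewrite -htl /k edinvK.
    by rewrite /= tk eqxx.
  have Hs' : size ((Send b, h1) :: s0) <= K by rewrite -ltnS.
  exact: (chain IHK Hm Hs' ps ng ne Him).
case: ps => [[_ [_ [ch _]]] _].
by move: ch; rewrite ng.
Qed.

End Cyc.

Theorem theorem5p2 (P : protocol) (hcyc : cyclic P)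
  (S S' : forall j : node P, @state P j)
  (s : seq (act (msg P) * gstate P)) :
  gs_path (GState S (@C0 P)) s ->
  path_end (GState S (@C0 P)) s = GState S' (@C0 P) ->
  forall beta : edge P,
  exists (g0' : gstate P) (s' : seq (act (msg P) * gstate P)),
    gs_path g0' s' /\
    locally_equal (GState S (@C0 P)) s g0' s' /\
    forall g, List.In g (path_states g0' s') ->
      \sum_(xi : edge P | xi != beta) size (gC g xi) <= 1.
Proof.
move=> [rc ps] pe beta.
case: hcyc => n [nd [ed [n0 [[ndinv ndK _] [[edinv edK edinvK] hk]]]]].
have htl : forall k, tail (ed k) = nd k by move=> k; case: (hk k).
have hhd : forall k, Defs.head (ed k) = nd (ordS k) by move=> k; case: (hk k).
have neC : nbempty beta (path_end (GState S (@C0 P)) s) by rewrite pe => xi _.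
have [s' [ps' [im bd]]] := @main P n nd ed edinv (can_inj ndK) edinvK htl hhd beta
  (size s).+1 (GState S (@C0 P)) s (ltnSn _) ps (fun _ _ => erefl) neC.
exists (GState S (@C0 P)), s'; split; first by split.
split; first by move=> i; unfold Defs.image; rewrite im.
exact: bd.
Qed.
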